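(* Let $n \geq 2$ and $d \geq 2$ be integers, let $k$ be a positive integer, and let $\mathcal{X} \subseteq \mathbb{R}^k$. Let $\mathcal{S}_n^d$ denote the collection of all sets $\{v_1, \ldots, v_n\}$ consisting of $n$ vectors $v_i \in \mathbb{R}^d$. Suppose $g\colon \mathcal{S}_n^d \to \mathcal{X}$ is continuous, where $\mathcal{S}_n^d$ is equipped with the symmetric Chamfer distance and $\mathcal{X}$ with the Euclidean distance. Let $h\colon \mathcal{X} \to \mathbb{R}^{n \times d}$ be a function such that for every $V = \{v_1, \ldots, v_n\} \in \mathcal{S}_n^d$ there exists a permutation $\sigma$ of $\{1, \ldots, n\}$ with $$h(g(\{v_1, \ldots, v_n\})) = [v_{\sigma(1)}, v_{\sigma(2)}, \ldots, v_{\sigma(n)}],$$ i.e. the matrix whose $i$-th row is $v_{\sigma(i)}$. Then $h$ is discontinuous (with respect to the Euclidean distances on $\mathcal{X}$ and on $\mathbb{R}^{n\times d}$).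
   Context: The symmetric Chamfer distance between two sets $A, B \in \mathcal{S}_n^d$ is $d_{\mathrm{Ch}}(A,B) = \sum_{a \in A} \min_{b \in B} \|a - b\|_2^2 + \sum_{b \in B} \min_{a \in A} \|a - b\|_2^2$. Elements of $\mathcal{S}_n^d$ are unordered, while elements of $\mathbb{R}^{n \times d}$ are ordered lists of $n$ vectors in $\mathbb{R}^d$. *)

(* Defs.v *)
From Stdlib Require Import Reals.
From HB Require Import structures.
From mathcomp Require Import all_boot all_order all_algebra all_fingroup.
From mathcomp Require Import finmap.
From mathcomp Require Import Rstruct.
Set Implicit Arguments. Unset Strict Implicit. Unset Printing Implicit Defensive.
Import Order.TTheory GRing.Theory Num.Theory.
Local Open Scope ring_scope.
Local Open Scope fset_scope.

(* Squared Euclidean distance between two m x p real matrices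
   (vectors of R^d are row vectors 'rV[R]_d = 'M[R]_(1,d)). *)
Definition sqdist (m p : nat) (A B : 'M[R]_(m, p)) : R :=
  \sum_(i < m) \sum_(j < p) (A i j - B i j) ^+ 2.

Definition edist (m p : nat) (A B : 'M[R]_(m, p)) : R :=
  Num.sqrt (sqdist A B).

(* min_{b in B} ||a - b||^2 for a nonempty finite set B (the neutral element
   of the iterated min is an element of B, so it is the true minimum). *)
Definition mindist (d : nat) (a : 'rV[R]_d) (B : {fset 'rV[R]_d}) : R :=
  \big[Order.min/sqdist a (head 0 (enum_fset B))]_(b <- enum_fset B) sqdist a b.

Definition chamfer (d : nat) (A B : {fset 'rV[R]_d}) : R :=
  \sum_(a <- enum_fset A) mindist a B + \sum_(b <- enum_fset B) mindist b A.

Definition Snd (n d : nat) := {A : {fset 'rV[R]_d} | #|` A| == n}.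

Definition chamfer_continuous (n d k : nat) (g : Snd n d -> 'rV[R]_k) : Prop :=
  forall (V : Snd n d) (eps : R), 0 < eps -> exists2 delta : R, 0 < delta &
    forall W : Snd n d, chamfer (val V) (val W) < delta ->
      edist (g V) (g W) < eps.

Definition continuous_on (k n d : nat) (X : 'rV[R]_k -> Prop)
  (h : 'rV[R]_k -> 'M[R]_(n, d)) : Prop :=
  forall x, X x -> forall eps : R, 0 < eps -> exists2 delta : R, 0 < delta &
    forall y, X y -> edist x y < delta -> edist (h x) (h y) < eps.

(* Main.v *)
Require Import Defs.
From Stdlib Require Import Reals.
From HB Require Import structures.
From mathcomp Require Import all_boot all_order all_algebra all_fingroup.
From mathcomp Require Import finmap.
From mathcomp Require Import Rstruct.
Import Order.TTheory GRing.Theory Num.Theory.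
Local Open Scope ring_scope.
Local Open Scope fset_scope.
Set Implicit Arguments. Unset Strict Implicit.

Lemma bigmin_seq_le (T : eqType) (s : seq T) (F : T -> R) x0 b :
  b \in s -> \big[Order.min/x0]_(c <- s) F c <= F b.
Proof.
elim: s => [//|a s IH]; rewrite in_cons big_cons => /orP [/eqP ->|bs].
  by rewrite minEle; case: ifP => // /negbT; rewrite -ltNge => /ltW.
rewrite minEle; case: ifP => [h|_]; last exact: IH.
exact: le_trans h (IH bs).
Qed.

Lemma mindist_le d (a : 'rV[R]_d) (B : {fset 'rV[R]_d}) b :
  b \in B -> mindist a B <= sqdist a b.
Proof. by move=> bB; rewrite /mindist; apply: bigmin_seq_le. Qed.

Lemma sum_seq_le (T : eqType) (s : seq T) (F : T -> R) e :
  (forall x, x \in s -> F x <= e) -> \sum_(x <- s) F x <= e *+ size s.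
Proof.
elim: s => [|a s IH] H; first by rewrite big_nil.
rewrite big_cons /= mulrS lerD //; first by apply: H; rewrite mem_head.
by apply: IH => x xs; apply: H; rewrite in_cons xs orbT.
Qed.

Lemma sumfs_le d (A B : {fset 'rV[R]_d}) e :
  (forall a, a \in A -> exists2 b, b \in B & sqdist a b <= e) ->
  \sum_(a <- enum_fset A) mindist a B <= e *+ #|` A|.
Proof.
move=> H; apply: sum_seq_le => a aA.
have [b bB hle] := H a aA; exact: (le_trans (mindist_le a bB) hle).
Qed.

Lemma sqdist_ge0 m p (A B : 'M[R]_(m, p)) : 0 <= sqdist A B.
Proof. by apply: sumr_ge0 => i _; apply: sumr_ge0 => j _; apply: sqr_ge0. Qed.

Lemma entry_le m p (A B : 'M[R]_(m, p)) i j : (A i j - B i j) ^+ 2 <= sqdist A B.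
Proof.
rewrite /sqdist (bigD1 i) //= (bigD1 j) //= -addrA lerDl addr_ge0 //.
  by apply: sumr_ge0 => k _; apply: sqr_ge0.
by apply: sumr_ge0 => k _; apply: sumr_ge0 => l _; apply: sqr_ge0.
Qed.

Lemma entry_dist m p (A B : 'M[R]_(m, p)) i j : `|A i j - B i j| <= edist A B.
Proof.
by rewrite /edist -sqrtr_sqr ler_sqrt ?entry_le // sqdist_ge0.
Qed.

From mathcomp Require Import ring lra.
Local Open Scope ring_scope.

Definition ent (t : R) (i j : nat) : R :=
  if j == 0%N then (if i == 0%N then cos t else if i == 1%N then - cos t else i.+1%:R)
  else if j == 1%N then (if i == 0%N then sin t else if i == 1%N then - sin t else 0)
  else 0.

Definition vv d (t : R) (i : nat) : 'rV[R]_d := \row_(j < d) ent t i j.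

Lemma sc t : cos t * cos t + sin t * sin t = 1.
Proof. have := sin2_cos2 t; rewrite /Rsqr addrC => h; exact: h. Qed.

Lemma cosb t : -1 <= cos t.
Proof. by have [h _] := COS_bound t; apply/RleP. Qed.

Lemma ent_inj t i k : ent t i 0 = ent t k 0 -> ent t i 1 = ent t k 1 -> i = k.
Proof.
have := sc t; have := cosb t.
case: i => [|[|i]]; case: k => [|[|k]] //=; rewrite /ent /=.
- move=> _ h e0 e1; exfalso; nra.
- move=> _ h e0 e1; have : 3 <= k.+3%:R :> R by rewrite ler_nat.
  move=> h3; exfalso; nra.
- move=> _ h e0 e1; exfalso; nra.
- move=> _ h e0 e1; have : 3 <= k.+3%:R :> R by rewrite ler_nat.
  move=> h3; exfalso; nra.
- move=> _ h e0 e1; have : 3 <= i.+3%:R :> R by rewrite ler_nat.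
  move=> h3; exfalso; nra.
- move=> _ h e0 e1; have : 3 <= i.+3%:R :> R by rewrite ler_nat.
  move=> h3; exfalso; nra.
- by move=> _ _ /eqP; rewrite eqr_nat => /eqP [->].
Qed.

Lemma vv_inj n d t : injective (fun i : 'I_n => vv d.+2 t i).
Proof.
move=> i k /= e.
have e0 := congr1 (fun M : 'rV[R]_d.+2 => M 0 (Ordinal (isT : 0 < d.+2)%N)) e.
have e1 := congr1 (fun M : 'rV[R]_d.+2 => M 0 (Ordinal (isT : 1 < d.+2)%N)) e.
move: e0 e1; rewrite /= !mxE /= => e0 e1; apply: val_inj; exact: ent_inj e0 e1.
Qed.

Lemma sq_vv d t0 x i : sqdist (vv d.+2 t0 i) (vv d.+2 x i) =
  (ent t0 i 0 - ent x i 0) ^+ 2 + (ent t0 i 1 - ent x i 1) ^+ 2.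
Proof.
rewrite /sqdist big_ord1 2!big_ord_recl big1 ?addr0 => [|j _]; rewrite !mxE //.
by rewrite /ent /= subrr expr0n.
Qed.

Lemma sq_vv_le d t0 x i : sqdist (vv d.+2 t0 i) (vv d.+2 x i) <=
  (cos t0 - cos x) ^+ 2 + (sin t0 - sin x) ^+ 2.
Proof.
rewrite sq_vv /ent /=; case: i => [|[|i]] /=; first by [].
  nra.
by rewrite subrr expr0n /= add0r subrr expr0n /= addr_ge0 ?sqr_ge0.
Qed.

Lemma G_ne0 t k : ent t k 0 * cos t + ent t k 1 * sin t + ent t k 0 * ent t k 0
   + ent t k 1 * ent t k 1 - 1 != 0.
Proof.
have := sc t; have := cosb t.
case: k => [|[|k]]; rewrite /ent /= => h1 h2; apply/eqP => h; try nra.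
have : 3 <= k.+3%:R :> R by rewrite ler_nat.
move=> h3; nra.
Qed.

Definition sw (i : nat) : nat := if i == 0%N then 1%N else if i == 1%N then 0%N else i.

Lemma cP : cos PI = -1 :> R. Proof. exact: cos_PI. Qed.
Lemma sP : sin PI = 0 :> R. Proof. exact: sin_PI. Qed.
Lemma c0 : cos 0 = 1 :> R. Proof. exact: cos_0. Qed.
Lemma s0 : sin 0 = 0 :> R. Proof. exact: sin_0. Qed.

Lemma ent_sw1 i j : ent PI i j = ent 0 (sw i) j.
Proof.
rewrite /ent /sw cP sP c0 s0; case: i => [|[|i]] /=; case: j => [|[|j]] //=;
  by rewrite ?opprK ?oppr0.
Qed.

Lemma ent_sw2 i j : ent 0 i j = ent PI (sw i) j.
Proof.
rewrite /ent /sw cP sP c0 s0; case: i => [|[|i]] /=; case: j => [|[|j]] //=;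
  by rewrite ?opprK ?oppr0.
Qed.

Lemma sw_lt n i : (i < n.+2)%N -> (sw i < n.+2)%N.
Proof. by rewrite /sw; case: i => [|[|i]]. Qed.

Local Open Scope fset_scope.
Theorem theorem1 (n d k : nat) (hn : (2 <= n)%N) (hd : (2 <= d)%N) (hk : (0 < k)%N)
  (X : 'rV[R]_k -> Prop) (g : Snd n d -> 'rV[R]_k)
  (h : 'rV[R]_k -> 'M[R]_(n, d))
  (gX : forall V, X (g V))
  (gcont : chamfer_continuous g)
  (hg : forall (V : Snd n d) (v : 'I_n -> 'rV[R]_d),
          [fset v i | i in 'I_n] = val V ->
          exists s : 'S_n, h (g V) = \matrix_(i < n, j < d) v (s i) 0 j) :
  ~ continuous_on X h.
Proof.
case: n hn g h gX gcont hg => [|[|n]] // _ g h gX gcont hg.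
case: d hd g h gX gcont hg => [|[|d]] // _ g h gX gcont hg.
move=> hc.
pose F0 t := [fset vv d.+2 t (nat_of_ord i) | i in 'I_n.+2].
have cardP t : #|` F0 t| == n.+2.
  by rewrite card_imfset ?size_enum_ord //; exact: vv_inj.
pose VS t : Snd n.+2 d.+2 := exist _ (F0 t) (cardP t).
pose M t := h (g (VS t)).
have mcont : forall (r : 'I_n.+2) (j : 'I_d.+2) t0, continuity_pt (fun t => M t r j) t0.
  move=> r j t0 eps /RltP epos.
  have [dh dhpos Hh] := hc (g (VS t0)) (gX _) eps epos.
  have [dg dgpos Hg] := gcont (VS t0) dh dhpos.
  pose N : R := (n.+2 + n.+2)%:R.
  have Npos : 0 < N by rewrite ltr0n.
  pose E := plus_fct (mult_fct (minus_fct (fun _ => cos t0) cos) (minus_fct (fun _ => cos t0) cos))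
            (mult_fct (minus_fct (fun _ => sin t0) sin) (minus_fct (fun _ => sin t0) sin)).
  have Ec : continuity_pt E t0.
    apply: continuity_pt_plus; apply: continuity_pt_mult; apply: continuity_pt_minus;
     try (apply: continuity_pt_const; by move=> ? ?);
     try apply: continuity_cos; try apply: continuity_sin.
  have dgN : 0 < dg / N by rewrite divr_gt0.
  have dgN' : Rlt 0 (dg / N) by apply/RltP.
  have [eta [etapos Heta]] := Ec _ dgN'.
  exists eta; split => // x hx.
  have Ex := Heta x hx.
  have E0 : E t0 = 0 by rewrite /E /plus_fct /mult_fct /minus_fct /= !RminusE !RmultE RplusE !subrr mul0r addr0.
  have Ex' : E x < dg / N.
    apply/RltP; simpl in Ex; unfold Rdist in Ex; rewrite E0 RminusE subr0 in Ex.
    exact: (Rle_lt_trans _ _ _ (RRle_abs _) Ex).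
  have hch : chamfer (F0 t0) (F0 x) <= (E x *+ n.+2 + E x *+ n.+2)%R.
    rewrite /chamfer; apply: lerD.
      have := sumfs_le (A:=F0 t0) (B:=F0 x) (e:=E x); rewrite (eqP (cardP t0)); apply.
      move=> a /imfsetP [i _ ->]; exists (vv d.+2 x i); first by apply/imfsetP; exists i.
      apply: le_trans (sq_vv_le _ _ _ _) _; rewrite !expr2; exact: lexx.
    have := sumfs_le (A:=F0 x) (B:=F0 t0) (e:=E x); rewrite (eqP (cardP x)); apply.
    move=> a /imfsetP [i _ ->]; exists (vv d.+2 t0 i); first by apply/imfsetP; exists i.
    apply: le_trans (sq_vv_le _ _ _ _) _.
    rewrite -(sqrrN (cos x - _)) -(sqrrN (sin x - _)) !opprB !expr2; exact: lexx.
  have hch2 : chamfer (F0 t0) (F0 x) < dg.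
    apply: le_lt_trans hch _; rewrite -mulrnDr -mulr_natr.
    by rewrite -(ltr_pM2r Npos) divfK ?gt_eqF in Ex'.
  have := Hh _ (gX _) (Hg (VS x) hch2) => hM.
  simpl; rewrite RdistE; apply/RltP; rewrite distrC.
  exact: le_lt_trans (entry_dist _ _ r j) hM.
have V0 : VS PI = VS 0.
  apply: val_inj => /=; apply/fsetP => a; apply/imfsetP/imfsetP => -[i _ ->] /=.
    exists (Ordinal (sw_lt (ltn_ord i))) => //.
    by apply/rowP => j; rewrite !mxE ent_sw1.
  exists (Ordinal (sw_lt (ltn_ord i))) => //.
  by apply/rowP => j; rewrite !mxE ent_sw2.
have [s hs] := hg (VS 0) (fun i => vv d.+2 0 i) erefl.
pose r := (s^-1)%g ord0.
have M0 : forall j, M 0 r j = ent 0 0 j.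
  by move=> j; rewrite /M hs mxE /r permKV mxE.
have MP : forall j, M PI r j = ent 0 0 j by move=> j; rewrite /M V0.
pose j0 : 'I_d.+2 := Ordinal (isT : (0 < d.+2)%N).
pose j1 : 'I_d.+2 := Ordinal (isT : (1 < d.+2)%N).
pose m0 t := M t r j0.
pose m1 t := M t r j1.
pose F := minus_fct (plus_fct (plus_fct (plus_fct (mult_fct m0 cos) (mult_fct m1 sin))
             (mult_fct m0 m0)) (mult_fct m1 m1)) (fun _ => 1%R).
have Fc : continuity F.
  move=> t; apply: continuity_pt_minus; last by apply: continuity_pt_const => ? ?.
  repeat apply: continuity_pt_plus; apply: continuity_pt_mult;
    try apply: mcont; try apply: continuity_cos; try apply: continuity_sin.
have F0v : F 0 = 1.
  rewrite /F /minus_fct /plus_fct /mult_fct /m0 /m1 !M0 /ent /= c0 s0.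
  rewrite !RminusE !RmultE !RplusE; ring.
have FPv : F PI = -1.
  rewrite /F /minus_fct /plus_fct /mult_fct /m0 /m1 !MP /ent /= c0 s0 cP sP.
  rewrite !RminusE !RmultE !RplusE; ring.
have Fneg : Rle (F 0 * F PI) 0.
  rewrite F0v FPv; apply/RleP; rewrite RmultE mul1r lerN10 //.
have [z [_ Fz]] := IVT_cor F 0 PI Fc (Rlt_le _ _ PI_RGT_0) Fneg.
have [s' hs'] := hg (VS z) (fun i => vv d.+2 z i) erefl.
have Mz : forall j, M z r j = ent z (s' r) j by move=> j; rewrite /M hs' !mxE.
move: Fz; rewrite /F /minus_fct /plus_fct /mult_fct /m0 /m1 !Mz /=.
rewrite !RminusE !RmultE !RplusE => Fz.
by move/eqP: (G_ne0 z (s' r)); apply.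
Qed.
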